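(* Let $X$ have the Cauchy distribution with location $\mu\in\mathbb{R}$ and scale $\sigma>0$, i.e. density $\frac1\sigma f_0\big(\frac{x-\mu}{\sigma}\big)$ with $f_0(z)=\frac{1}{\pi(1+z^2)}$, and let $F_0$ be the CDF of $f_0$. For $c>1$, the unique positive root of $\frac{f_0(\frac{c}{c+1}\theta)}{f_0(\frac{c}{c-1}\theta)}=\frac{c+1}{c-1}$ is $\theta(c)=\frac{\sqrt{c^2-1}}{c}$, and the infimum coverage $$\psi(c)=\inf_{\mu,\sigma}P_{\mu,\sigma}\big(X-c|X|\le\mu\le X+c|X|\big)= F_0\Big(\frac{c}{c+1}\theta(c)\Big)+1-F_0\Big(\frac{c}{c-1}\theta(c)\Big)$$ is continuous in $c$ and satisfies $\psi(c)\to 1/2$ as $c\downarrow 1$ and $\psi(c)\to1$ as $c\to\infty$. Consequently, for every $\alpha$ with $0<\alpha<1/2$ there exists $c=c(\alpha)>1$ such that $\inf_{\mu\in\mathbb{R},\sigma>0}P_{\mu,\sigma}\big(X-c|X|\le\mu\le X+c|X|\big)=1-\alpha$. *)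

(* Defs.v *)
From HB Require Import structures.
From mathcomp Require Import all_boot all_order all_algebra.
From mathcomp Require Import all_classical all_reals all_analysis.
Set Implicit Arguments. Unset Strict Implicit. Unset Printing Implicit Defensive.
Import Order.TTheory GRing.Theory Num.Theory.
Import numFieldNormedType.Exports.
Local Open Scope classical_set_scope.
Local Open Scope ring_scope.

Section Cauchy.
Variable R : realType.

Definition f0 (z : R) : R := (pi * (1 + z ^+ 2))^-1.

Definition F0 (z : R) : R :=
  fine (\int[@lebesgue_measure R]_(x in [set x : R | (x <= z)%R]) (f0 x)%:E)%E.

Definition cauchy_pdf (mu sigma : R) (x : R) : R := sigma^-1 * f0 ((x - mu) / sigma).

Definition coverage (mu sigma c : R) : \bar R :=
  (\int[@lebesgue_measure R]_(x in [set x : R | (x - c * `|x| <= mu <= x + c * `|x|)%R])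
      (cauchy_pdf mu sigma x)%:E)%E.

Definition inf_coverage (c : R) : \bar R :=
  ereal_inf [set y | exists mu sigma : R, 0 < sigma /\ y = coverage mu sigma c].

Definition theta (c : R) : R := Num.sqrt (c ^+ 2 - 1) / c.

Definition psi (c : R) : R :=
  F0 (c / (c + 1) * theta c) + 1 - F0 (c / (c - 1) * theta c).

End Cauchy.

(* Main.v *)
Require Import Defs.
From HB Require Import structures.
From mathcomp Require Import all_boot all_order all_algebra.
From mathcomp Require Import all_classical all_reals all_analysis.
From mathcomp Require Import ring lra measurable_realfun.
Import Order.TTheory GRing.Theory Num.Theory.
Import numFieldNormedType.Exports.
Local Open Scope classical_set_scope.
Local Open Scope ring_scope.

Section T.
Variable R : realType.
Implicit Types u v : R.

Lemma atan_ge0 u : 0 <= u -> 0 <= atan u.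
Proof. by move=> u0; rewrite -(@atan0 R) le_atan. Qed.

Lemma atan_gt0 u : 0 < u -> 0 < atan u.
Proof. by move=> u0; rewrite -(@atan0 R) lt_atan. Qed.

Lemma cos_atan_neq0 u : cos (atan u) != 0.
Proof. by rewrite gt_eqF// cos_gt0_pihalf// atan_gtNpi2 atan_ltpi2. Qed.

Lemma atan_sub u v : 0 <= u -> 0 <= v ->
  atan u - atan v = atan ((u - v) / (1 + u * v)).
Proof.
move=> u0 v0.
have pi0 : 0 < pi / 2 :> R by rewrite divr_gt0// pi_gt0.
have Au := atan_ge0 _ u0; have Av := atan_ge0 _ v0.
have Bu := @atan_ltpi2 R u; have Bv := @atan_ltpi2 R v.
rewrite -[LHS]tanK; last by rewrite in_itv/=; apply/andP; split; lra.
congr atan; rewrite -atanN tanD ?cos_atan_neq0// !atanK.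
by rewrite mulrN opprK.
Qed.

Lemma atan_inv v : 0 < v -> atan v^-1 = pi / 2 - atan v.
Proof.
move=> v0.
have pi0 : 0 < pi / 2 :> R by rewrite divr_gt0// pi_gt0.
have Av := atan_gt0 _ v0; have Bv := @atan_ltpi2 R v.
rewrite -[RHS]tanK; last by rewrite in_itv/=; apply/andP; split; lra.
congr atan.
have : tan (atan v) = v := atanK v.
rewrite /tan => e.
have sn : sin (atan v) != 0 by rewrite gt_eqF// sin_gt0_pihalf// Av Bv.
have cn := cos_atan_neq0 v.
have -> : pi / 2 - atan v = - (atan v - pi / 2) by ring.
by rewrite sinN cosN sinBpihalf cosBpihalf opprK -[in LHS]e invf_div.
Qed.

Lemma f0_ratio (x y : R) : f0 x / f0 y = (1 + y ^+ 2) / (1 + x ^+ 2).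
Proof.
have p0 : (pi : R) != 0 by rewrite gt_eqF ?pi_gt0.
have hx : 1 + x ^+ 2 != 0 by rewrite gt_eqF ?ltr_pwDl ?sqr_ge0.
have hy : 1 + y ^+ 2 != 0 by rewrite gt_eqF ?ltr_pwDl ?sqr_ge0.
rewrite /f0; move: (pi : R) p0 => p p0; field.
by rewrite p0 hx hy.
Qed.

Lemma ratio_eq (c t : R) : 1 < c ->
  (f0 (c / (c + 1) * t) / f0 (c / (c - 1) * t) = (c + 1) / (c - 1)) <->
  c ^+ 2 * t ^+ 2 = c ^+ 2 - 1.
Proof.
move=> c1; rewrite f0_ratio.
have h1 : c - 1 != 0 by rewrite subr_eq0 gt_eqF.
have h2 : c + 1 != 0 by rewrite gt_eqF// ltr_wpDl; lra.
have h3 : 1 + (c / (c + 1) * t) ^+ 2 != 0 by rewrite gt_eqF ?ltr_pwDl ?sqr_ge0.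
have h4 : c ^+ 2 - 1 != 0 by rewrite subr_eq0 gt_eqF// expr2; nra.
have E : (1 + (c / (c - 1) * t) ^+ 2) * (c - 1) - (c + 1) * (1 + (c / (c + 1) * t) ^+ 2)
  = 2 * (c ^+ 2 * t ^+ 2 - (c ^+ 2 - 1)) / (c ^+ 2 - 1).
  by field; rewrite h1 h2 h4.
have h5 : (2 : R) / (c ^+ 2 - 1) != 0 by rewrite mulf_neq0 ?invr_eq0 ?pnatr_eq0.
split.
  move/eqP; rewrite eqr_div // -subr_eq0 E mulrAC mulf_eq0 (negbTE h5) /= subr_eq0.
  by move/eqP.
move=> e; apply/eqP; rewrite eqr_div // -subr_eq0 E e subrr mulr0 mul0r //.
Qed.

Lemma theta_gt0 (c : R) : 1 < c -> 0 < theta c.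
Proof.
move=> c1; rewrite /theta divr_gt0 ?sqrtr_gt0; try lra.
by rewrite subr_gt0 expr2; nra.
Qed.

Lemma theta_sq (c : R) : 1 < c -> c ^+ 2 * theta c ^+ 2 = c ^+ 2 - 1.
Proof.
move=> c1; rewrite /theta expr_div_n sqr_sqrtr; last by rewrite subr_ge0 expr2; nra.
by field; rewrite gt_eqF //; lra.
Qed.

Lemma part1 (c : R) : 1 < c ->
     0 < theta c /\
     f0 (c / (c + 1) * theta c) / f0 (c / (c - 1) * theta c) = (c + 1) / (c - 1) /\
     (forall t : R, 0 < t ->
        f0 (c / (c + 1) * t) / f0 (c / (c - 1) * t) = (c + 1) / (c - 1) ->
        t = theta c).
Proof.
move=> c1; split; first exact: theta_gt0.
split; first by apply/ratio_eq => //; exact: theta_sq.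
move=> t t0 /(ratio_eq c t c1); rewrite -(theta_sq _ c1) => e.
have c0 : c ^+ 2 != 0 by rewrite expf_neq0 // gt_eqF //; lra.
have : t ^+ 2 = theta c ^+ 2 by apply: (mulfI c0).
move/eqP; rewrite eqf_sqr => /orP[/eqP//|/eqP et].
have := theta_gt0 _ c1; lra.
Qed.

Lemma f0_gt0 (z : R) : 0 < f0 z.
Proof. by rewrite /f0 invr_gt0 mulr_gt0 ?pi_gt0 ?ltr_pwDl ?sqr_ge0. Qed.

Lemma continuous_f0 : continuous (@f0 R).
Proof.
move=> z; rewrite /f0.
apply: cvgV; first by rewrite gt_eqF// mulr_gt0 ?pi_gt0 ?ltr_pwDl ?sqr_ge0.
apply: cvgM; first exact: cvg_cst.
apply: cvgD; first exact: cvg_cst.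
exact: (@exprn_continuous R 2 z).
Qed.

Lemma continuous_pdf (mu s : R) : continuous (cauchy_pdf mu s).
Proof.
move=> x; rewrite /cauchy_pdf.
apply: cvgM; first exact: cvg_cst.
apply: (continuous_comp (f := fun x => (x - mu) / s)); last exact: continuous_f0.
apply: cvgM; last exact: cvg_cst.
apply: cvgB; [exact: cvg_id| exact: cvg_cst].
Qed.

Definition G (mu s x : R) := atan ((x - mu) / s) / pi.

Lemma is_derive_G (mu s x : R) : 0 < s -> is_derive x 1 (G mu s) (cauchy_pdf mu s x).
Proof.
move=> s0.
have h : is_derive x 1 (fun x => (x - mu) / s) (s^-1).
  have -> : (fun x => (x - mu) / s) = s^-1 \*: (@id R - cst mu).
    by apply/funext => y /=; rewrite mulrC.
  apply: is_derive_eq.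
  by rewrite subr0 /GRing.scale/= mulr1.
have k : is_derive ((x - mu) / s) 1 (fun y => atan y / pi) ((1 + ((x - mu) / s) ^+ 2)^-1 / pi).
  have -> : (fun y : R => atan y / pi) = pi^-1 \*: (@atan R).
    by apply/funext => y /=; rewrite mulrC.
  apply: is_derive_eq.
  by rewrite /GRing.scale/= mulrC.
have := @is_derive1_comp R (fun y => atan y / pi) (fun x => (x - mu) / s) x _ _ k h.
rewrite /cauchy_pdf /f0 => hh.
have -> : G mu s = (fun y => atan y / pi) \o (fun x => (x - mu) / s) by [].
apply: (is_derive_eq hh).
rewrite invrM ?unitfE ?gt_eqF ?pi_gt0 ?ltr_pwDl ?sqr_ge0//.
by rewrite mulrC [_^-1 * _^-1]mulrC.
Qed.

Lemma derivable_G (mu s x : R) : 0 < s -> derivable (G mu s) x 1.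
Proof. by move=> s0; have [] := is_derive_G mu s x s0. Qed.

Lemma derive1_G (mu s x : R) : 0 < s -> (G mu s)^`()%classic x = cauchy_pdf mu s x.
Proof. by move=> s0; rewrite derive1E; have [] := is_derive_G mu s x s0. Qed.

Lemma continuous_G (mu s : R) : 0 < s -> continuous (G mu s).
Proof.
move=> s0 x; apply: differentiable_continuous.
exact/derivable1_diffP/derivable_G.
Qed.

Lemma pdf_ge0 (mu s x : R) : 0 < s -> 0 <= cauchy_pdf mu s x.
Proof. by move=> s0; apply: mulr_ge0; [rewrite invr_ge0 ltW | exact: ltW (f0_gt0 _)]. Qed.

Lemma G_cvgy (mu s : R) : 0 < s -> G mu s x @[x --> +oo] --> (2^-1 : R).
Proof.
move=> s0.
have hy : (fun x => (x - mu) / s) x @[x --> +oo] --> +oo.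
  apply/cvgryPge => A; near=> x.
  rewrite ler_pdivlMr// lerBrDr; near: x; apply: nbhs_pinfty_ge; exact: num_real.
have := cvg_comp _ _ hy (@cvgy_atan R).
move=> /(cvgMr_tmp (b := (pi^-1 : R))) h.
have -> : (2^-1 : R) = pi / 2 * pi^-1.
  by rewrite mulrAC divff ?mul1r // gt_eqF ?pi_gt0.
exact: h.
Unshelve. all: by end_near. Qed.

Local Notation mu := (@lebesgue_measure R).

Lemma I1 (m s r : R) : 0 < s ->
  (\int[mu]_(x in `[r, +oo[) (cauchy_pdf m s x)%:E = (2^-1 - G m s r)%:E)%E.
Proof.
move=> s0; rewrite EFinB.
apply: ge0_continuous_FTC2y.
- by move=> x _; exact: pdf_ge0.
- by apply: continuous_subspaceT; exact: continuous_pdf.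
- exact: G_cvgy.
- by move=> x _; exact: derivable_G.
- by apply: cvg_at_right_filter; exact: continuous_G.
- by move=> x _; exact: derive1_G.
Qed.

Lemma pdfN (m s x : R) : cauchy_pdf m s (- x) = cauchy_pdf (- m) s x.
Proof.
rewrite /cauchy_pdf /f0.
by have -> : ((-x - m)/s)^+2 = ((x - -m)/s)^+2 by ring.
Qed.

Lemma I2 (m s l : R) : 0 < s ->
  (\int[mu]_(x in `]-oo, l]) (cauchy_pdf m s x)%:E = (2^-1 + G m s l)%:E)%E.
Proof.
move=> s0; rewrite -[l]opprK ge0_integration_by_substitutionNy; first last.
- by move=> x _; exact: pdf_ge0.
- by apply: continuous_subspaceT; exact: continuous_pdf.
under eq_integral do rewrite /= pdfN.
rewrite I1 // /G; congr EFin.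
rewrite !opprK.
have -> : - l + m = - (l - m) by rewrite opprB addrC.
by rewrite mulNr atanN mulNr opprK.
Qed.

Lemma F0E (z : R) : F0 z = 2^-1 + atan z / pi.
Proof.
rewrite /F0 -set_itvNyc.
have e x : f0 x = cauchy_pdf 0 1 x by rewrite /cauchy_pdf invr1 mul1r subr0 mulr1.
under eq_integral do rewrite e.
by rewrite I2 // /G subr0 divr1.
Qed.

Lemma split_int (m s l r : R) (B : set R) : 0 < s -> measurable B ->
  [disjoint `]-oo, l] & B] ->
  (\int[mu]_(x in B) (cauchy_pdf m s x)%:E = (2^-1 - G m s r)%:E)%E ->
  (\int[mu]_(x in `]-oo, l] `|` B) (cauchy_pdf m s x)%:E = (1 + G m s l - G m s r)%:E)%E.
Proof.
move=> s0 mB dis IB.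
rewrite ge0_integral_setU //.
- rewrite I2 // IB -EFinD; congr EFin.
  lra.
- apply/measurable_EFinP; apply: measurable_funTS.
  exact: continuous_measurable_fun (continuous_pdf m s).
- by move=> x _; rewrite lee_fin pdf_ge0.
Qed.

Definition S (m c : R) := [set x : R | (x - c * `|x| <= m <= x + c * `|x|)%R].

Lemma S_pos (m c : R) : 0 < m -> 1 < c ->
  S m c = `]-oo, (- m / (c - 1))] `|` `[(m / (c + 1)), +oo[.
Proof.
move=> m0 c1; have c10 : 0 < c - 1 by lra.
have c20 : 0 < c + 1 by lra.
apply/seteqP; rewrite /S; split => x /=; rewrite !in_itv /= ?andbT.
- move/andP => [h1 h2].
  case: (lerP 0 x) => hx.
    right; rewrite ler_pdivrMr //; rewrite ger0_norm // in h2; nra.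
  left; rewrite ler_pdivlMr //; rewrite ltr0_norm // in h2; nra.
- case=> h.
    rewrite ler_pdivlMr // in h.
    have hx : x < 0 by nra.
    rewrite ltr0_norm //; apply/andP; split; nra.
  rewrite ler_pdivrMr // in h.
  have hx : 0 < x by nra.
  rewrite (ger0_norm (ltW hx)); apply/andP; split; nra.
Qed.

Lemma S_neg (m c : R) : m < 0 -> 1 < c ->
  S m c = `]-oo, (m / (c + 1))] `|` `[(- m / (c - 1)), +oo[.
Proof.
move=> m0 c1; have c10 : 0 < c - 1 by lra.
have c20 : 0 < c + 1 by lra.
apply/seteqP; rewrite /S; split => x /=; rewrite !in_itv /= ?andbT.
- move/andP => [h1 h2].
  case: (lerP 0 x) => hx.
    right; rewrite ler_pdivrMr //; rewrite ger0_norm // in h1; nra.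
  left; rewrite ler_pdivlMr //; rewrite ltr0_norm // in h1; nra.
- case=> h.
    rewrite ler_pdivlMr // in h.
    have hx : x < 0 by nra.
    rewrite ltr0_norm //; apply/andP; split; nra.
  rewrite ler_pdivrMr // in h.
  have hx : 0 < x by nra.
  rewrite (ger0_norm (ltW hx)); apply/andP; split; nra.
Qed.

Lemma S_0 (c : R) : 1 < c -> S 0 c = `]-oo, 0] `|` `]0, +oo[.
Proof.
move=> c1; apply/seteqP; rewrite /S; split => x /=; rewrite !in_itv /= ?andbT.
- by move=> _; case: (lerP x 0) => h; [left|right].
- move=> _; case: (lerP 0 x) => hx.
    rewrite ger0_norm //; apply/andP; split; nra.
  rewrite ltr0_norm //; apply/andP; split; nra.
Qed.

Lemma disj1 (l r : R) : l < r -> [disjoint `]-oo, l] & `[r, +oo[].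
Proof.
move=> lr; apply/disj_setPS => x [] /=; rewrite !in_itv /= ?andbT => h1 h2.
have : r <= l := le_trans h2 h1. by rewrite leNgt lr.
Qed.

Lemma disj2 (l : R) : [disjoint `]-oo, l] & `]l, +oo[].
Proof.
apply/disj_setPS => x [] /=; rewrite !in_itv /= ?andbT => h1 h2.
by move: (lt_le_trans h2 h1); rewrite ltxx.
Qed.

Definition D (c t : R) := atan (c / (c - 1) * t) - atan (c / (c + 1) * t).

Lemma coverage_eq (m s c : R) : 0 < s -> 1 < c ->
  coverage m s c = (1 - D c (`|m| / s) / pi)%:E.
Proof.
move=> s0 c1; have c10 : c - 1 != 0 by rewrite gt_eqF // subr_gt0.
have c20 : c + 1 != 0 by rewrite gt_eqF //; lra.
have sn : s != 0 by rewrite gt_eqF.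
rewrite /coverage (_ : [set x | _] = S m c) //.
case: (ltgtP m 0) => hm.
- rewrite S_neg // (split_int _ _ _ (- m / (c - 1))) //; first last.
  + exact: I1.
  + apply: disj1.
    have h1 : m / (c + 1) < 0 by rewrite ltr_pdivrMr ?mul0r //; lra.
    have h2 : 0 < - m / (c - 1) by rewrite divr_gt0 //; lra.
    lra.
  congr EFin; rewrite /G /D ltr0_norm //.
  have -> : (m / (c + 1) - m) / s = c / (c + 1) * (- m / s) by field; rewrite c20 sn.
  have -> : (- m / (c - 1) - m) / s = c / (c - 1) * (- m / s) by field; rewrite c10 sn.
  rewrite mulNr; lra.
- rewrite S_pos // (split_int _ _ _ (m / (c + 1))) //; first last.
  + exact: I1.
  + apply: disj1.
    have h1 : - m / (c - 1) < 0 by rewrite ltr_pdivrMr ?mul0r //; lra.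
    have h2 : 0 < m / (c + 1) by rewrite divr_gt0 //; lra.
    lra.
  congr EFin; rewrite /G /D gtr0_norm //.
  have -> : (m / (c + 1) - m) / s = - (c / (c + 1) * (m / s)) by field; rewrite c20 sn.
  have -> : (- m / (c - 1) - m) / s = - (c / (c - 1) * (m / s)) by field; rewrite c10 sn.
  rewrite !atanN !mulNr; lra.
- rewrite hm S_0 // (split_int _ _ _ (0)) //; first last.
  + rewrite integral_itv_obnd_cbnd; first exact: I1.
    apply/measurable_EFinP; apply: measurable_funTS.
    exact: continuous_measurable_fun (continuous_pdf 0 s).
  + exact: disj2.
  congr EFin; rewrite /D normr0 mul0r !mulr0 atan0; lra.
Qed.

Lemma D_le (c t : R) : 1 < c -> 0 <= t -> D c t <= D c (theta c).
Proof.
move=> c1 t0.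
have th0 := theta_gt0 _ c1; have thsq := theta_sq _ c1.
set th := theta c in th0 thsq *.
set b := c / (c - 1); set a := c / (c + 1).
have c10 : 0 < c - 1 by lra.
have c20 : 0 < c + 1 by lra.
have hb : 0 < b by rewrite divr_gt0 //; lra.
have ha : 0 < a by rewrite divr_gt0 //; lra.
have hab : a < b.
  rewrite /a /b ltr_pdivrMr // mulrAC ltr_pdivlMr //; nra.
have e : b * th * (a * th) = 1.
  have c2 : c ^+ 2 - 1 != 0 by rewrite gt_eqF // subr_gt0 expr2; nra.
  rewrite /a /b.
  have -> : c / (c - 1) * th * (c / (c + 1) * th) = (c ^+ 2 * th ^+ 2) / (c ^+ 2 - 1).
    by field; rewrite c2 !gt_eqF.
  by rewrite thsq divff.
rewrite /D -/b -/a.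
rewrite (atan_sub (b*t) (a*t)); [|by rewrite mulr_ge0 // ltW|by rewrite mulr_ge0 // ltW].
rewrite (atan_sub (b*th) (a*th)); [|by rewrite mulr_ge0 // ltW|by rewrite mulr_ge0 // ltW].
apply: le_atan; rewrite e.
rewrite ler_pdivrMr; last by rewrite ltr_pwDl // mulr_ge0 // mulr_ge0 // ltW.
set X := _ - _ in e *.
have E : th * ((b * th - a * th) / (1 + 1) * (1 + b * t * (a * t)) - (b * t - a * t))
   = (b - a) / 2 * (t - th) ^+ 2 + (b - a) / 2 * t ^+ 2 * (b * th * (a * th) - 1).
  by field.
rewrite e subrr mulr0 addr0 in E.
have : 0 <= th * ((b * th - a * th) / (1 + 1) * (1 + b * t * (a * t)) - (b * t - a * t)).
  by rewrite E mulr_ge0 // ?sqr_ge0 // divr_ge0 //; lra.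
rewrite pmulr_rge0 // subr_ge0 //.
Qed.

Lemma psiE (c : R) : psi c = 1 - D c (theta c) / pi.
Proof. rewrite /psi /D !F0E; lra. Qed.

Lemma part2 (c : R) : 1 < c -> inf_coverage c = (psi c)%:E.
Proof.
move=> c1; apply/eqP; rewrite eq_le; apply/andP; split.
- apply: ereal_inf_lbound; exists (theta c), 1; split => //.
  rewrite coverage_eq // psiE divr1 gtr0_norm //; exact: theta_gt0.
- apply: le_ereal_inf_tmp => y [m [s [s0 ->]]].
  rewrite coverage_eq // psiE lee_fin lerB // ler_pM2r ?invr_gt0 ?pi_gt0 //.
  by apply: D_le => //; rewrite divr_ge0 // ltW.
Qed.

Definition q (c : R) := 2^-1 + atan (Num.sqrt (c ^+ 2 - 1)) / pi.

Lemma continuous_q : continuous q.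
Proof.
move=> x; apply: cvgD; first exact: cvg_cst.
apply: cvgMr_tmp.
apply: (continuous_comp (f := fun c : R => Num.sqrt (c ^+ 2 - 1))); last exact: continuous_atan.
apply: (continuous_comp (f := fun c : R => c ^+ 2 - 1)); last exact: sqrt_continuous.
apply: cvgB; [exact: exprn_continuous | exact: cvg_cst].
Qed.

Lemma psi_q (c : R) : 1 < c -> psi c = q c.
Proof.
move=> c1; rewrite psiE /q /D.
have th0 := theta_gt0 _ c1.
have c10 : 0 < c - 1 by lra.
have c20 : 0 < c + 1 by lra.
have hb : 0 < c / (c - 1) by rewrite divr_gt0 //; lra.
have ha : 0 < c / (c + 1) by rewrite divr_gt0 //; lra.
rewrite (atan_sub (c/(c-1)*theta c) (c/(c+1)*theta c)); [| by rewrite mulr_ge0 // ltW | by rewrite mulr_ge0 // ltW].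
set sq := Num.sqrt (c ^+ 2 - 1).
have c2 : 0 < c ^+ 2 - 1 by rewrite subr_gt0 expr2; nra.
have sq0 : 0 < sq by rewrite sqrtr_gt0.
have sqsq : sq ^+ 2 = c ^+ 2 - 1 by rewrite sqr_sqrtr // ltW.
have -> : (c / (c - 1) * theta c - c / (c + 1) * theta c) /
    (1 + c / (c - 1) * theta c * (c / (c + 1) * theta c)) = sq^-1.
  rewrite /theta -/sq.
  have -> : c / (c - 1) * (sq / c) - c / (c + 1) * (sq / c) = 2 * sq / (c ^+ 2 - 1).
    by field; rewrite !gt_eqF //; lra.
  have -> : c / (c - 1) * (sq / c) * (c / (c + 1) * (sq / c)) = sq ^+ 2 / (c ^+ 2 - 1).
    by field; rewrite !gt_eqF //; lra.
  rewrite -sqsq.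
  by field; rewrite !gt_eqF // exprn_gt0.
rewrite atan_inv //.
have p0 : (pi : R) != 0 by rewrite gt_eqF ?pi_gt0.
move: (pi : R) p0 => p p0.
by field.
Qed.

Lemma part3 (c : R) : 1 < c -> {for c, continuous (psi (R:=R))}.
Proof.
move=> c1.
have H : {near c, q =1 psi (R:=R)}.
  near=> x; rewrite psi_q //; near: x; exact: lt_nbhsr.
apply: cvg_trans (near_eq_cvg H) _.
rewrite psi_q //; exact: continuous_q.
Unshelve. all: by end_near. Qed.

Lemma part4 : psi x @[x --> 1^'+] --> (2^-1 : R).
Proof.
have H : {near 1^'+, q =1 psi (R:=R)}.
  near=> x; rewrite psi_q //; near: x; exact: nbhs_right_gt.
apply: cvg_trans (near_eq_cvg H) _.
have -> : (2^-1 : R) = q 1.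
  by rewrite /q expr1n subrr sqrtr0 atan0 mul0r addr0.
apply: cvg_at_right_filter; exact: continuous_q.
Unshelve. all: by end_near. Qed.

Lemma part5 : psi x @[x --> +oo] --> (1 : R).
Proof.
have H : {near +oo, q =1 psi (R:=R)}.
  near=> x; rewrite psi_q //; near: x; apply: nbhs_pinfty_gt; exact: num_real.
apply: cvg_trans (near_eq_cvg H) _.
have hy : (fun x : R => Num.sqrt (x ^+ 2 - 1)) x @[x --> +oo] --> +oo.
  apply/cvgryPge => A; near=> x.
  have x1 : 1 <= x by near: x; apply: nbhs_pinfty_ge; exact: num_real.
  have xA : A + 1 <= x by near: x; apply: nbhs_pinfty_ge; exact: num_real.
  have : x - 1 <= Num.sqrt (x ^+ 2 - 1).
    rewrite -[X in X <= _]ger0_norm ?subr_ge0 // -sqrtr_sqr.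
    by apply: ler_wsqrtr; rewrite !expr2; nra.
  lra.
have := cvg_comp _ _ hy (@cvgy_atan R).
move=> /(cvgMr_tmp (b := (pi^-1 : R))) h.
have -> : (1 : R) = 2^-1 + pi / 2 * pi^-1.
  rewrite mulrAC divff ?mul1r ?gt_eqF ?pi_gt0 //.
  have -> : (2^-1 : R) = 1 / 2 by rewrite mul1r.
  by rewrite -splitr.
apply: cvgD; first exact: cvg_cst.
exact: h.
Unshelve. all: by end_near. Qed.

Lemma part6 (alpha : R) : 0 < alpha < 2^-1 ->
  exists c : R, 1 < c /\ inf_coverage c = (1 - alpha)%:E.
Proof.
move=> /andP[a0 a2].
have pi0 : (0 : R) < pi := pi_gt0 R.
set y := pi * (2^-1 - alpha).
have y0 : 0 < y by rewrite mulr_gt0 // subr_gt0.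
have y2 : y < pi / 2.
  rewrite /y; nra.
have cy : 0 < cos y by rewrite cos_gt0_pihalf //; apply/andP; split; lra.
have sy : 0 < sin y by rewrite sin_gt0_pihalf // y0 y2.
set s := tan y.
have s0 : 0 < s by rewrite /s /tan divr_gt0.
exists (Num.sqrt (1 + s ^+ 2)).
have c1 : 1 < Num.sqrt (1 + s ^+ 2).
  rewrite -[X in X < _]sqrtr1 ltr_sqrt; first by rewrite ltr_pwDr // exprn_gt0.
  by rewrite ltr_pwDr ?ltr01 // exprn_gt0.
split => //.
rewrite part2 // psi_q // /q sqr_sqrtr; last by rewrite addr_ge0 // sqr_ge0.
rewrite [1 + _]addrC addrK sqrtr_sqr gtr0_norm // /s tanK; last first.
  by rewrite in_itv /=; apply/andP; split; lra.
congr EFin; rewrite /y mulrAC divff ?gt_eqF // mul1r.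
lra.
Qed.
End T.

Theorem mainTheorem7 (R : realType) :
  (* theta(c) is the unique positive root of f0(c/(c+1) t) / f0(c/(c-1) t) = (c+1)/(c-1) *)
  (forall c : R, 1 < c ->
     0 < theta c /\
     f0 (c / (c + 1) * theta c) / f0 (c / (c - 1) * theta c) = (c + 1) / (c - 1) /\
     (forall t : R, 0 < t ->
        f0 (c / (c + 1) * t) / f0 (c / (c - 1) * t) = (c + 1) / (c - 1) ->
        t = theta c)) /\
  (* the infimum coverage equals psi(c) *)
  (forall c : R, 1 < c -> inf_coverage c = (psi c)%:E) /\
  (* psi is continuous on c > 1 *)
  (forall c : R, 1 < c -> {for c, continuous (@psi R)}) /\
  (* limits *)
  (psi x @[x --> 1^'+] --> (2^-1 : R)) /\
  (psi x @[x --> +oo] --> (1 : R)) /\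
  (* consequence *)
  (forall alpha : R, 0 < alpha < 2^-1 ->
     exists c : R, 1 < c /\ inf_coverage c = (1 - alpha)%:E).
Proof.
split; first by move=> c; exact: part1.
split; first by move=> c; exact: part2.
split; first by move=> c; exact: part3.
split; first exact: part4.
split; first exact: part5.
by move=> alpha; exact: part6.
Qed.
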